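(* Let $\epsilon=\mu=\gamma=\chi=1$, $M>0$, $T>0$. Consider the Crank–Nicolson bound-preserving scheme started from $0\le\rho_h^0\le M$ (nodewise), $c_h^0\in X_h$, with $\rho_h^{-1}=\rho_h^0$, $c_h^{-1}=\tilde c_h^0=c_h^0$, $\lambda_h^0\equiv0$, $\xi_h^0=0$. Then there is a constant $C>0$ depending only on $M$ and $T$ such that for all $m\ge1$ with $m\delta t\le T$, $$\|\rho_h^m\|^2+\|\nabla_hc_h^m\|^2+\delta t\sum_{n=0}^{m-1}\|\Delta_h\tilde c_h^{n+\frac12}\|^2+\tfrac{\delta t^2}4\|\lambda_h^mg'(\rho_h^m)+\xi_h^m\|^2+\delta t\sum_{n=0}^{m-1}\|\nabla_h\tilde\rho_h^{n+\frac12}\|^2\le C\big(\|\rho_h^0\|^2+\|\nabla_hc_h^0\|^2\big).$$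
   Context: Discrete setting: $\Sigma_h$ finite set of nodes in $\bar\Omega\subset\mathbb R^d$; $X_h$ = real grid functions on $\Sigma_h$, nonlinear functions act pointwise. $[u,v]=\sum_z\beta_zu(z)v(z)$, $\beta_z>0$ (vector version $\sum_z\beta_zw(z)\cdot w'(z)$), $\|u\|=[u,u]^{1/2}$, $|\Omega|=[1,1]$. $\nabla_h,\nabla_h\cdot$ satisfy $[\nabla_h\cdot w,v]=-[w,\nabla_hv]$, $\nabla_h1=0$ (periodic boundary conditions); $\Delta_h=\nabla_h\cdot\nabla_h$. $\sigma,\delta t>0$. $\eta(\rho)=\frac{\rho(M-\rho)}M$, $g(\rho)=\rho(M-\rho)$, $g'(\rho)=M-2\rho$. Notation $\tilde c_h^{n+\frac12}=\frac{\tilde c_h^{n+1}+c_h^n}2$, $\tilde\rho_h^{n+\frac12}=\frac{\tilde\rho_h^{n+1}+\rho_h^n}2$, $\rho_h^{n+\frac12}=\frac{\rho_h^{n+1}+\rho_h^n}2$. Crank–Nicolson bound-preserving scheme ($\epsilon=\mu=\gamma=\chi=1$), for $n\ge0$: Step 1: $\frac{\tilde c_h^{n+1}-c_h^n}{\delta t}=\Delta_h\tilde c_h^{n+\frac12}+\frac32\rho_h^n-\frac12\rho_h^{n-1}$. Step 2: $\frac{\tilde\rho_h^{n+1}-\rho_h^n}{\delta t}=\Delta_h\tilde\rho_h^{n+\frac12}-\nabla_h\cdot(\eta(\frac32\rho_h^n-\frac12\rho_h^{n-1})\nabla_h(\frac32c_h^n-\frac12c_h^{n-1}))+\lambda_h^ng'(\rho_h^n)+\xi_h^n$.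 Step 3: find $\rho_h^{n+1},\lambda_h^{n+1}\in X_h$, $\xi_h^{n+1}\in\mathbb R$ with $\frac{\rho_h^{n+1}-\tilde\rho_h^{n+1}}{\delta t}=\frac{\lambda_h^{n+1}g'(\rho_h^{n+1})+\xi_h^{n+1}-\lambda_h^ng'(\rho_h^n)-\xi_h^n}2$ nodewise, $g(\rho_h^{n+1})\ge0$, $\lambda_h^{n+1}\ge0$, $\lambda_h^{n+1}g(\rho_h^{n+1})=0$ at every node, $[\rho_h^{n+1},1]=[\rho_h^0,1]$. Step 4: find $c_h^{n+1}$ and scalar $\theta_h^{n+\frac12}$ with $\frac{c_h^{n+1}-\tilde c_h^{n+1}}{\delta t}=\theta_h^{n+\frac12}$ and $\frac{E_h^{n+1}-E_h^n}{\delta t}=-[\eta(\rho_h^{n+\frac12})|\nabla_h(\log(\rho_h^{n+\frac12}+\sigma)-\tilde c_h^{n+\frac12})|^2+|\frac{\tilde c_h^{n+1}-\tilde c_h^n}{\delta t}|^2,1]$, where $E_h^j=[\rho_h^j\log(\rho_h^j+\sigma)+(M-\rho_h^j)\log(1-\rho_h^j/M+\sigma)-\rho_h^jc_h^j+\frac12|\nabla_hc_h^j|^2,1]$. *)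

(* Defs.v *)
From mathcomp Require Import all_boot all_order all_algebra.
From mathcomp Require Import all_classical all_reals all_analysis.
Set Implicit Arguments. Unset Strict Implicit. Unset Printing Implicit Defensive.
Import Order.TTheory GRing.Theory Num.Theory.
Local Open Scope ring_scope.

Section CNDefs.
Variables (R : realType) (S : finType) (d : nat).

Definition ipr (beta : S -> R) (u v : S -> R) : R :=
  \sum_(z : S) beta z * (u z * v z).
Definition vipr (beta : S -> R) (w w' : S -> 'I_d -> R) : R :=
  \sum_(z : S) beta z * (\sum_(i < d) w z i * w' z i).
Definition nrm2 beta (u : S -> R) := ipr beta u u.
Definition vnrm2 beta (w : S -> 'I_d -> R) := vipr beta w w.

Definition onef : S -> R := fun _ => 1.
Definition avg (u v : S -> R) : S -> R := fun z => (u z + v z) / 2.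
Definition extr (u v : S -> R) : S -> R := fun z => 3/2 * u z - 1/2 * v z.

Definition lap (grad : (S -> R) -> S -> 'I_d -> R)
  (div : (S -> 'I_d -> R) -> S -> R) (u : S -> R) : S -> R := div (grad u).

Definition eta (M r : R) : R := r * (M - r) / M.
Definition gg (M r : R) : R := r * (M - r).
Definition gg' (M r : R) : R := M - 2 * r.

Definition energy beta (grad : (S -> R) -> S -> 'I_d -> R) (M sigma : R)
  (rho c : S -> R) : R :=
  ipr beta (fun z => rho z * ln (rho z + sigma)
                    + (M - rho z) * ln (1 - rho z / M + sigma)
                    - rho z * c z
                    + 1/2 * (\sum_(i < d) grad c z i ^+ 2)) onef.

Definition discrete_setting beta (grad : (S -> R) -> S -> 'I_d -> R)
  (div : (S -> 'I_d -> R) -> S -> R) : Prop :=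
  [/\ forall z, 0 < beta z,
      forall (w : S -> 'I_d -> R) (v : S -> R), ipr beta (div w) v = - vipr beta w (grad v)
    & grad onef = (fun _ _ => 0)].

(* Sequences are indexed by nat: rho n = rho_h^n, c n = c_h^n, ct n = tilde c_h^n,
   rhot n = tilde rho_h^n (n >= 1; rhot 0 unused), lam n = lambda_h^n, xi n = xi_h^n.
   The index n.-1 at n = 0 gives 0, which encodes rho_h^{-1}=rho_h^0, c_h^{-1}=c_h^0. *)
Definition CN_scheme beta (grad : (S -> R) -> S -> 'I_d -> R)
  (div : (S -> 'I_d -> R) -> S -> R) (M sigma dt : R)
  (rho c ct rhot lam : nat -> S -> R) (xi : nat -> R) : Prop :=

      (forall z, 0 <= rho 0%N z <= M) /\
      ct 0%N = c 0%N /\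
      lam 0%N = (fun _ => 0) /\
      xi 0%N = 0 /\
      (forall (n : nat) z,
         (ct n.+1 z - c n z) / dt
         = lap grad div (avg (ct n.+1) (c n)) z + 3/2 * rho n z - 1/2 * rho n.-1 z) /\
      (forall (n : nat) z,
         (rhot n.+1 z - rho n z) / dt
         = lap grad div (avg (rhot n.+1) (rho n)) z
           - div (fun y i => eta M (extr (rho n) (rho n.-1) y)
                             * grad (extr (c n) (c n.-1)) y i) z
           + lam n z * gg' M (rho n z) + xi n) /\
      (forall n : nat,
         (forall z, (rho n.+1 z - rhot n.+1 z) / dt
            = (lam n.+1 z * gg' M (rho n.+1 z) + xi n.+1
               - lam n z * gg' M (rho n z) - xi n) / 2)
         /\ (forall z, [/\ 0 <= gg M (rho n.+1 z), 0 <= lam n.+1 z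
                          & lam n.+1 z * gg M (rho n.+1 z) = 0])
         /\ ipr beta (rho n.+1) onef = ipr beta (rho 0%N) onef) /\
      (forall n : nat,
         exists theta : R,
           (forall z, (c n.+1 z - ct n.+1 z) / dt = theta)
           /\ (energy beta grad M sigma (rho n.+1) (c n.+1)
               - energy beta grad M sigma (rho n) (c n)) / dt
              = - ipr beta (fun z =>
                    eta M (avg (rho n.+1) (rho n) z)
                    * (\sum_(i < d)
                         grad (fun y => ln (avg (rho n.+1) (rho n) y + sigma)
                                        - avg (ct n.+1) (c n) y) z i ^+ 2)
                    + ((ct n.+1 z - ct n z) / dt) ^+ 2) onef).

End CNDefs.

(* Main.v *)
Require Import Defs.
From mathcomp Require Import all_boot all_order all_algebra.
From mathcomp Require Import all_classical all_reals all_analysis.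
From mathcomp Require Import ring lra.
Import Order.TTheory GRing.Theory Num.Theory.
Local Open Scope ring_scope.

Definition II {R : realType} {S : finType} (beta : S -> R) (f : S -> R) : R :=
  \sum_z beta z * f z.
Definition VI {R : realType} {S : finType} {d : nat} (beta : S -> R)
  (f : S -> 'I_d -> R) : R := \sum_z beta z * \sum_(i < d) f z i.

Lemma I_add (R : realType) (S : finType) (beta : S -> R) f g :
  II beta f + II beta g = II beta (fun z => f z + g z).
Proof. by rewrite /II -big_split; apply eq_bigr => z _; rewrite mulrDr. Qed.
Lemma I_opp (R : realType) (S : finType) (beta : S -> R) f :
  - II beta f = II beta (fun z => - f z).
Proof. by rewrite /II -sumrN; apply eq_bigr => z _; rewrite mulrN. Qed.
Lemma I_scale (R : realType) (S : finType) (beta : S -> R) k f :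
  k * II beta f = II beta (fun z => k * f z).
Proof. by rewrite /II mulr_sumr; apply eq_bigr => z _; rewrite mulrCA. Qed.
Lemma I_ext (R : realType) (S : finType) (beta : S -> R) f g :
  (forall z, f z = g z) -> II beta f = II beta g.
Proof. by move=> H; apply eq_bigr => z _; rewrite H. Qed.
Lemma I_le (R : realType) (S : finType) (beta : S -> R) f g :
  (forall z, 0 < beta z) -> (forall z, f z <= g z) -> II beta f <= II beta g.
Proof. move=> Hb H; apply: ler_sum => z _; apply: ler_wpM2l; [exact: ltW | exact: H]. Qed.
Lemma VI_add (R : realType) (S : finType) d (beta : S -> R) (f g : S -> 'I_d -> R) :
  VI beta f + VI beta g = VI beta (fun z i => f z i + g z i).
Proof. by rewrite /VI -big_split; apply eq_bigr => z _; rewrite big_split mulrDr. Qed.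
Lemma VI_opp (R : realType) (S : finType) d (beta : S -> R) (f : S -> 'I_d -> R) :
  - VI beta f = VI beta (fun z i => - f z i).
Proof. by rewrite /VI -sumrN; apply eq_bigr => z _; rewrite -mulrN sumrN. Qed.
Lemma VI_scale (R : realType) (S : finType) d (beta : S -> R) k (f : S -> 'I_d -> R) :
  k * VI beta f = VI beta (fun z i => k * f z i).
Proof. by rewrite /VI mulr_sumr; apply eq_bigr => z _; rewrite mulrCA mulr_sumr. Qed.
Lemma VI_ext (R : realType) (S : finType) d (beta : S -> R) (f g : S -> 'I_d -> R) :
  (forall z i, f z i = g z i) -> VI beta f = VI beta g.
Proof. by move=> H; apply eq_bigr => z _; congr (_ * _); apply eq_bigr => i _; rewrite H. Qed.
Lemma VI_le (R : realType) (S : finType) d (beta : S -> R) (f g : S -> 'I_d -> R) :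
  (forall z, 0 < beta z) -> (forall z i, f z i <= g z i) -> VI beta f <= VI beta g.
Proof.
move=> Hb H; apply: ler_sum => z _; apply: ler_wpM2l; first exact: ltW.
by apply: ler_sum => i _; exact: H.
Qed.

Lemma grad_lin (R : realType) (S : finType) d (beta : S -> R) grad div :
  discrete_setting (d:=d) beta grad div -> forall k1 k2 u v,
  grad (fun z => k1 * u z + k2 * v z) = fun z i => k1 * grad u z i + k2 * grad v z i.
Proof.
case=> Hb Hadj _ k1 k2 u v.
apply: funext => z; apply: funext => i.
pose w := fun (y : S) (j : 'I_d) => ((y == z) && (j == i))%:R : R.
have key : forall f, vipr beta w (grad f) = beta z * grad f z i.
  move=> f; rewrite /vipr (bigD1 z) //= [X in _ + X]big1 => [|y yz]; last first.
    by rewrite big1 ?mulr0 // => j _; rewrite /w (negbTE yz) /= mul0r.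
  rewrite addr0; congr (_ * _); rewrite (bigD1 i) //= big1 => [|j ji].
    by rewrite /w !eqxx mul1r addr0.
  by rewrite /w eqxx (negbTE ji) mul0r.
have lin : ipr beta (div w) (fun z => k1 * u z + k2 * v z)
   = k1 * ipr beta (div w) u + k2 * ipr beta (div w) v.
  by rewrite /ipr !mulr_sumr -big_split; apply eq_bigr => y _ /=; ring.
have bz0 : beta z != 0 by apply: lt0r_neq0.
apply: (mulfI bz0); rewrite -key -[LHS]opprK -Hadj lin !Hadj !key; ring.
Qed.

Arguments grad_lin {R S d beta grad div}.

Lemma vnrm2_VI (R : realType) (S : finType) d (beta : S -> R) (w : S -> 'I_d -> R) :
  vnrm2 beta w = VI beta (fun z i => w z i * w z i).
Proof. by []. Qed.
Lemma nrm2_II (R : realType) (S : finType) (beta : S -> R) (u : S -> R) :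
  nrm2 beta u = II beta (fun z => u z * u z).
Proof. by []. Qed.

Ltac Icol := rewrite ?(I_scale, I_opp, I_add).
Ltac VIcol := rewrite ?(VI_scale, VI_opp, VI_add).

Lemma avg_lin (R : realType) (S : finType) (a b : S -> R) :
  avg a b = fun z => 2^-1 * a z + 2^-1 * b z.
Proof. by apply: funext => z; rewrite /avg; ring. Qed.
Lemma sub_lin (R : realType) (S : finType) (a b : S -> R) :
  (fun z => a z - b z) = fun z => 1 * a z + (-1) * b z.
Proof. by apply: funext => z; ring. Qed.
Lemma extr_lin (R : realType) (S : finType) (a b : S -> R) :
  extr a b = fun z => (3/2) * a z + (-(1/2)) * b z.
Proof. by apply: funext => z; rewrite /extr; ring. Qed.

Lemma c_step (R : realType) (S : finType) d (beta : S -> R) grad div (dt : R) (a b f : S -> R) :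
  discrete_setting (d:=d) beta grad div -> 0 < dt ->
  (forall z, (a z - b z) / dt = lap grad div (avg a b) z + f z) ->
  vnrm2 beta (grad a) - vnrm2 beta (grad b) + dt * nrm2 beta (lap grad div (avg a b))
  <= dt * nrm2 beta f.
Proof.
move=> Hs dt0 H.
have Hs' := Hs; case: Hs' => Hb Hadj _.
set L := lap grad div (avg a b).
have Ha : forall z, a z - b z = dt * (L z + f z).
  by move=> z; rewrite -H mulrC divfK // lt0r_neq0.
have e1 : II beta (fun z => L z * (a z - b z)) = -(2^-1) * vnrm2 beta (grad a) + 2^-1 * vnrm2 beta (grad b).
  have -> : II beta (fun z => L z * (a z - b z)) = - VI beta (fun z i => grad (avg a b) z i * grad (fun z => a z - b z) z i)
    := Hadj _ _.
  rewrite avg_lin sub_lin !(grad_lin Hs).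
  rewrite !vnrm2_VI; VIcol; apply: VI_ext => z i; ring.
have e2 : II beta (fun z => L z * (a z - b z)) = dt * nrm2 beta L + dt * II beta (fun z => L z * f z).
  rewrite nrm2_II; Icol; apply: I_ext => z; rewrite Ha; ring.
have i3 : -(2^-1) * nrm2 beta L - 2^-1 * nrm2 beta f <= II beta (fun z => L z * f z).
  rewrite !nrm2_II; Icol; apply: I_le => // z.
  have h : 0 <= 2^-1 * (L z + f z)^+2 by apply: mulr_ge0; [lra|exact: sqr_ge0].
  lra.
have i4 := ler_wpM2l (ltW dt0) i3.
lra.
Qed.

Lemma eta_bound (R : realType) (M p q : R) : 0 < M -> 0 <= p <= M -> 0 <= q <= M ->
  eta M (3/2 * p - 1/2 * q) ^+ 2 <= M ^+ 2.
Proof.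
move=> M0 /andP[p0 pM] /andP[q0 qM].
set r := 3/2 * p - 1/2 * q.
have r1 : - (M / 2) <= r by rewrite /r; lra.
have r2 : r <= 3 * M / 2 by rewrite /r; lra.
set t := r * (M - r).
have t1 : t <= M ^+ 2 by rewrite /t; nra.
have t2 : - M ^+ 2 <= t by rewrite /t; nra.
have t3 : t ^+ 2 <= M ^+ 2 * M ^+ 2 by nra.
rewrite /eta -/r -/t expr_div_n ler_pdivrMr; last by rewrite exprn_gt0.
by [].
Qed.

Lemma young3 (R : realType) (M e x y g : R) : e ^+ 2 <= M ^+ 2 ->
  e * (3/2 * x + (-(1/2)) * y) * g <= M ^+ 2 / 2 * (3 * (x * x) + y * y) + 1/2 * (g * g).
Proof.
move=> he.
set s := 3/2 * x + (-(1/2)) * y.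
have h1 : 0 <= (e * s - g) ^+ 2 by apply: sqr_ge0.
have h2 : e ^+ 2 * s ^+ 2 <= M ^+ 2 * s ^+ 2 by apply: ler_wpM2r => //; apply: sqr_ge0.
have h3 : s ^+ 2 <= 3 * (x * x) + y * y.
  have : 0 <= (x + y) ^+ 2 by apply: sqr_ge0.
  rewrite /s; nra.
have h4 : M ^+ 2 * s ^+ 2 <= M ^+ 2 * (3 * (x * x) + y * y) by apply: ler_wpM2l => //; apply: sqr_ge0.
nra.
Qed.

Lemma r_step (R : realType) (S : finType) d (beta : S -> R) grad div (M dt : R)
  (a b bm r1 P0 P1 cn cnm : S -> R) :
  discrete_setting (d:=d) beta grad div -> 0 < M -> 0 < dt ->
  (forall z, 0 <= b z <= M) -> (forall z, 0 <= bm z <= M) ->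
  (forall z, (a z - b z) / dt = lap grad div (avg a b) z
       - div (fun y i => eta M (extr b bm y) * grad (extr cn cnm) y i) z + P0 z) ->
  (forall z, (r1 z - a z) / dt = (P1 z - P0 z) / 2) ->
  II beta (fun z => r1 z * P1 z) <= 0 -> II beta (fun z => b z * P0 z) <= 0 ->
  nrm2 beta r1 + dt ^+ 2 / 4 * nrm2 beta P1 - (nrm2 beta b + dt ^+ 2 / 4 * nrm2 beta P0)
   + dt * vnrm2 beta (grad (avg a b))
  <= dt * M ^+ 2 * (3 * vnrm2 beta (grad cn) + vnrm2 beta (grad cnm)).
Proof.
move=> Hs M0 dt0 Hbb Hbm H2 H3 sg1 sg0.
have Hs' := Hs; case: Hs' => Hb Hadj _.
have dtn0 : dt != 0 by apply: lt0r_neq0.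
set L := lap grad div (avg a b).
set W := (fun y i => eta M (extr b bm y) * grad (extr cn cnm) y i).
set G := grad (avg a b).
have Ha : forall z, a z = b z + dt * (L z - div W z + P0 z).
  by move=> z; rewrite -H2 mulrC divfK //; ring.
have Hr : forall z, r1 z = a z + dt / 2 * (P1 z - P0 z).
  by move=> z; have := H3 z; move/(congr1 (fun t => t * dt)); rewrite divfK // => e; lra.
have e1 : II beta (fun z => L z * avg a b z) = - vnrm2 beta G := Hadj _ _.
have e2 : II beta (fun z => div W z * avg a b z) = - VI beta (fun z i => W z i * G z i) := Hadj _ _.
have e3 : nrm2 beta r1 + dt ^+ 2 / 4 * nrm2 beta P1 - (nrm2 beta b + dt ^+ 2 / 4 * nrm2 beta P0)
   = 2 * dt * II beta (fun z => L z * avg a b z) - 2 * dt * II beta (fun z => div W z * avg a b z)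
     + dt * II beta (fun z => b z * P0 z) + dt * II beta (fun z => r1 z * P1 z).
  rewrite !nrm2_II; Icol; apply: I_ext => y; rewrite /avg Hr Ha; by field.
have i4 : VI beta (fun z i => W z i * G z i)
   <= M ^+ 2 / 2 * (3 * vnrm2 beta (grad cn) + vnrm2 beta (grad cnm)) + 1/2 * vnrm2 beta G.
  rewrite !vnrm2_VI mulrDr; VIcol; apply: VI_le => // z i.
  rewrite /W [extr cn cnm]extr_lin (grad_lin Hs).
  have := @young3 R M (eta M (extr b bm z)) (grad cn z i) (grad cnm z i) (G z i).
  have := @eta_bound R M (b z) (bm z) M0 (Hbb z) (Hbm z).
  rewrite /extr => hb hy; have := hy hb; lra.
have i5 := ler_wpM2l (ltW dt0) i4.
have i6 := ler_wpM2l (ltW dt0) sg1.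
have i7 := ler_wpM2l (ltW dt0) sg0.
rewrite e3 e1 e2; rewrite mulr0 in i6 i7.
lra.
Qed.

Lemma II0 (R : realType) (S : finType) (beta : S -> R) : II beta (fun _ => 0) = 0.
Proof. by rewrite /II big1 // => z _; rewrite mulr0. Qed.

Lemma II_div0 (R : realType) (S : finType) d (beta : S -> R) grad div :
  discrete_setting (d:=d) beta grad div -> forall w, II beta (div w) = 0.
Proof.
case=> Hb Hadj Hg w.
have := Hadj w (@onef R S); rewrite Hg /vipr big1 ?oppr0 => [e|z _]; last first.
  by rewrite big1 ?mulr0 // => i _; rewrite mulr0.
by rewrite -e; apply: I_ext => z; rewrite /onef mulr1.
Qed.

Lemma ipr_one (R : realType) (S : finType) (beta : S -> R) u :
  ipr beta u (@onef R S) = II beta u.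
Proof. by apply: I_ext => z; rewrite /onef mulr1. Qed.

Arguments II_div0 {R S d beta grad div}.

Lemma mass_lemma (R : realType) (S : finType) d (beta : S -> R) grad div (M sigma dt : R)
  (rho c ct rhot lam : nat -> S -> R) (xi : nat -> R) :
  discrete_setting (d:=d) beta grad div -> 0 < dt ->
  CN_scheme beta grad div M sigma dt rho c ct rhot lam xi ->
  forall n, II beta (rho n) = II beta (rho 0%N) /\
            II beta (fun z => lam n z * gg' M (rho n z) + xi n) = 0.
Proof.
move=> Hs dt0 [H0 [Hct0 [Hlam0 [Hxi0 [S1 [S2 [S3 S4]]]]]]].
have dtn0 : dt != 0 by apply: lt0r_neq0.
have mass : forall n, II beta (rho n) = II beta (rho 0%N).
  by case=> // n; have [_ [_ e]] := S3 n; rewrite -!ipr_one.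
elim=> [|n [_ IH]].
  split => //; rewrite Hlam0 Hxi0 -[RHS](@II0 R S beta); apply: I_ext => z; ring.
split; first exact: mass.
set P0 := fun z => lam n z * gg' M (rho n z) + xi n.
set P1 := fun z => lam n.+1 z * gg' M (rho n.+1 z) + xi n.+1.
have e1 : II beta (rhot n.+1) - II beta (rho n)
   = dt * II beta (lap grad div (avg (rhot n.+1) (rho n)))
     - dt * II beta (div (fun y i => eta M (extr (rho n) (rho n.-1) y) * grad (extr (c n) (c n.-1)) y i))
     + dt * II beta P0.
  Icol; apply: I_ext => z; have := S2 n z.
  move/(congr1 (fun t => t * dt)); rewrite divfK // => e; rewrite /P0; lra.
have e2 : II beta (rho n.+1) - II beta (rhot n.+1) = dt / 2 * II beta P1 - dt / 2 * II beta P0.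
  Icol; apply: I_ext => z; have [h _] := S3 n; have := h z.
  move/(congr1 (fun t => t * dt)); rewrite divfK // => e; rewrite /P0 /P1; lra.
move: e1 e2; rewrite /lap !(II_div0 Hs) IH !mass => e1 e2.
have : dt / 2 * II beta P1 = 0 by lra.
by move/eqP; rewrite mulf_eq0 => /orP[|/eqP //]; rewrite mulf_eq0 invr_eq0 (negbTE dtn0) /=; lra.
Qed.

Arguments mass_lemma {R S d beta grad div M sigma dt rho c ct rhot lam xi}.

Lemma sign_pt (R : realType) (M Om m r l : R) : 0 < M -> 0 <= m <= Om * M ->
  0 <= r * (M - r) -> 0 <= l -> l * (r * (M - r)) = 0 ->
  (Om * r - m) * (l * (M - 2 * r)) <= 0.
Proof.
move=> M0 /andP[m0 mM] g0 l0 e.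
have [->|ln0] := eqVneq l 0; first by rewrite !mul0r mulr0.
move/eqP: e; rewrite mulf_eq0 (negbTE ln0) /= mulf_eq0 => /orP[/eqP->|].
  by rewrite mulr0 sub0r mulNr oppr_le0; apply: mulr_ge0 => //; apply: mulr_ge0 => //; lra.
rewrite subr_eq0 => /eqP <-.
have : 0 <= (Om * M - m) * (l * M) by apply: mulr_ge0; [lra | apply: mulr_ge0; lra].
lra.
Qed.

Lemma sign_lemma (R : realType) (S : finType) d (beta : S -> R) grad div (M sigma dt : R)
  (rho c ct rhot lam : nat -> S -> R) (xi : nat -> R) :
  discrete_setting (d:=d) beta grad div -> 0 < dt -> 0 < M ->
  CN_scheme beta grad div M sigma dt rho c ct rhot lam xi ->
  forall n, (forall z, 0 <= rho n z <= M) /\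
    II beta (fun z => rho n z * (lam n z * gg' M (rho n z) + xi n)) <= 0.
Proof.
move=> Hs dt0 M0 Hsch.
have Hml := mass_lemma Hs dt0 Hsch.
move: Hsch => [H0 [Hct0 [Hlam0 [Hxi0 [S1 [S2 [S3 S4]]]]]]].
have [Hb _ _] := Hs.
case=> [|n].
  split => //; rewrite Hlam0 Hxi0 -[X in _ <= X](@II0 R S beta).
  by apply: I_le => // z; rewrite mul0r add0r mulr0.
have [_ [Hc _]] := S3 n.
have rb : forall z, 0 <= rho n.+1 z <= M.
  move=> z; have [g0 _ _] := Hc z; move: g0; rewrite /gg => g0.
  apply/andP; split; nra.
split => //.
set Om := II beta (fun _ => 1).
set m := II beta (rho 0%N).
set r := rho n.+1; set l := lam n.+1; set x := xi n.+1.
have [mr eP] := Hml n.+1.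
have Om0 : 0 <= Om.
  rewrite /Om -(@II0 R S beta); apply: I_le => // z; lra.
have mb : 0 <= m <= Om * M.
  apply/andP; split.
    rewrite /m -(@II0 R S beta); apply: I_le => // z; have := H0 z; lra.
  rewrite /Om mulrC I_scale; apply: I_le => // z; have := H0 z; lra.
have e1 : II beta (fun z => r z * (l z * gg' M (r z) + x))
   = II beta (fun z => r z * (l z * gg' M (r z))) + x * II beta r.
  by Icol; apply: I_ext => z; ring.
have e2 : II beta (fun z => l z * gg' M (r z) + x) = II beta (fun z => l z * gg' M (r z)) + x * Om.
  by Icol; apply: I_ext => z; ring.
have e3' : forall A B : R, A * II beta (fun z => r z * (l z * gg' M (r z))) - B * II beta (fun z => l z * gg' M (r z))
   = II beta (fun z => (A * r z - B) * (l z * gg' M (r z))).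
  by move=> A B; Icol; apply: I_ext => z; ring.
have e3 := e3' Om m.
have i4 : II beta (fun z => (Om * r z - m) * (l z * gg' M (r z))) <= 0.
  rewrite -(@II0 R S beta); apply: I_le => // z.
  have [g0 l0 lg] := Hc z.
  by apply: sign_pt.
rewrite mr -/m in e1.
rewrite eP in e2.
have [Om00|Ompos] := eqVneq Om 0.
  have Hemp : forall z : S, False.
    move=> z; move: Om00; rewrite /Om /II (bigD1 z) //= mulr1 => /eqP.
    have : 0 <= \sum_(i | i != z) beta i * 1.
      by apply: sumr_ge0 => i _; rewrite mulr1; apply: ltW.
    have := Hb z; lra.
  by rewrite /II big1 // => z; case: (Hemp z).
have Omp : 0 < Om by rewrite lt0r Ompos.
have : Om * II beta (fun z => r z * (l z * gg' M (r z) + x)) <= 0.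
  rewrite e1 mulrDr.
  have -> : Om * (x * m) = - (m * II beta (fun z => l z * gg' M (r z))).
    have : x * Om = - II beta (fun z => l z * gg' M (r z)) by lra.
    move=> h; rewrite mulrA (mulrC Om) h; ring.
  by rewrite -e3 in i4; lra.
by rewrite pmulr_rle0.
Qed.

Lemma gronwall (R : realType) (Y D : nat -> R) (dt K T : R) : 0 < dt -> 0 <= K ->
  (forall n, 0 <= Y n) -> (forall n, 0 <= D n) ->
  (forall n, Y n.+1 - Y n + dt * D n <= dt * K * (Y n + Y n.-1)) ->
  forall m, m%:R * dt <= T ->
  Y m + dt * \sum_(n < m) D n <= (1 + 2 * K * T * expR (2 * K * T)) * Y 0%N.
Proof.
move=> dt0 K0 Y0 D0 H m mT.
set q := 1 + 2 * dt * K.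
have dK : 0 <= dt * K by apply: mulr_ge0 => //; apply: ltW.
have q1 : 1 <= q by rewrite /q; lra.
have g1 : forall n, Y n <= q ^+ n * Y 0%N /\ Y n.-1 <= q ^+ n * Y 0%N.
  elim=> [|n [h1 h2]]; first by rewrite expr0 mul1r.
  have X0 : 0 <= q ^+ n * Y 0%N by apply: mulr_ge0 => //; apply: exprn_ge0; lra.
  have a1 := ler_wpM2l dK h1.
  have a2 := ler_wpM2l dK h2.
  have := H n; have := D0 n; have := mulr_ge0 (ltW dt0) (D0 n).
  rewrite exprS -mulrA /q => b1 b2 b3; split; nra.
set E := expR (2 * K * T).
have g2 : forall n, (n <= m)%N -> q ^+ n <= E.
  move=> n nm.
  have e1 : q <= expR (2 * dt * K) by apply: expR_ge1Dx.
  apply: (le_trans (y := expR (2 * dt * K) ^+ n)).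
    apply: lerXn2r => //; rewrite nnegrE; [lra | apply: expR_ge0].
  rewrite -expRM_natl /E ler_expR.
  have : n%:R * dt <= T.
    apply: le_trans mT; apply: ler_wpM2r; [exact: ltW | by rewrite ler_nat].
  move=> h; have := ler_wpM2l (mulr_ge0 (ler0n _ 2) K0) h; lra.
have g3 : forall m', Y m' + dt * \sum_(n < m') D n <= Y 0%N + dt * K * \sum_(n < m') (Y n + Y n.-1).
  elim=> [|m' IH]; first by rewrite !big_ord0 !mulr0 !addr0.
  rewrite !big_ord_recr /= !mulrDr; have := H m'; lra.
have g4 : \sum_(n < m) (Y n + Y n.-1) <= m%:R * (2 * E * Y 0%N).
  have -> : m%:R * (2 * E * Y 0%N) = \sum_(n < m) (2 * E * Y 0%N).
    by rewrite sumr_const card_ord mulr_natl.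
  apply: ler_sum => n _.
  have [h1 h2] := g1 n.
  have := g2 n (ltnW (ltn_ord n)) => qE.
  have := ler_wpM2r (Y0 0%N) qE; lra.
have := ler_wpM2l dK g4.
have := g3 m.
have h5 : m%:R * dt * (2 * K * E * Y 0%N) <= T * (2 * K * E * Y 0%N).
  apply: ler_wpM2r => //; apply: mulr_ge0; last exact: Y0.
  apply: mulr_ge0; last exact: expR_ge0.
  apply: mulr_ge0 => //; lra.
nra.
Qed.

Arguments sign_lemma {R S d beta grad div M sigma dt rho c ct rhot lam xi}.

Lemma nrm2_ge0 (R : realType) (S : finType) (beta : S -> R) u :
  (forall z, 0 < beta z) -> 0 <= nrm2 beta u.
Proof.
move=> Hb; rewrite nrm2_II -(@II0 R S beta); apply: I_le => // z.
by rewrite -expr2 sqr_ge0.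
Qed.
Lemma vnrm2_ge0 (R : realType) (S : finType) d (beta : S -> R) (w : S -> 'I_d -> R) :
  (forall z, 0 < beta z) -> 0 <= vnrm2 beta w.
Proof.
move=> Hb; apply: sumr_ge0 => z _; apply: mulr_ge0; first exact: ltW.
by apply: sumr_ge0 => i _; rewrite -expr2 sqr_ge0.
Qed.

Arguments nrm2_ge0 {R S beta}.
Arguments vnrm2_ge0 {R S d beta}.

Theorem mainTheorem9 (R : realType) (M Tf : R) :
  0 < M -> 0 < Tf ->
  exists C : R, 0 < C /\
  forall (d : nat) (S : finType) (beta : S -> R)
         (grad : (S -> R) -> S -> 'I_d -> R) (div : (S -> 'I_d -> R) -> S -> R)
         (sigma dt : R) (rho c ct rhot lam : nat -> S -> R) (xi : nat -> R),
    (0 < d)%N -> 0 < sigma -> 0 < dt ->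
    discrete_setting beta grad div ->
    CN_scheme beta grad div M sigma dt rho c ct rhot lam xi ->
    forall m : nat, (1 <= m)%N -> m%:R * dt <= Tf ->
      nrm2 beta (rho m) + vnrm2 beta (grad (c m))
      + dt * (\sum_(n < m) nrm2 beta (lap grad div (avg (ct n.+1) (c n))))
      + dt ^+ 2 / 4 * nrm2 beta (fun z => lam m z * gg' M (rho m z) + xi m)
      + dt * (\sum_(n < m) vnrm2 beta (grad (avg (rhot n.+1) (rho n))))
      <= C * (nrm2 beta (rho 0%N) + vnrm2 beta (grad (c 0%N))).
Proof.
move=> M0 T0.
set K2 := 3 * M ^+ 2 + 3.
have K20 : 0 <= K2 by rewrite /K2; have := sqr_ge0 M; lra.
exists (1 + 2 * K2 * Tf * expR (2 * K2 * Tf)); split.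
  have : 0 <= 2 * K2 * Tf * expR (2 * K2 * Tf).
    apply: mulr_ge0; last exact: expR_ge0.
    apply: mulr_ge0; [apply: mulr_ge0 => //|exact: ltW].
  lra.
move=> d S beta grad div sigma dt rho c ct rhot lam xi d0 s0 dt0 Hs Hsch m m1 mT.
have Hsign := sign_lemma Hs dt0 M0 Hsch.
have Hs' := Hs; case: Hs' => Hb Hadj Hg.
move: Hsch => [H0 [Hct0 [Hlam0 [Hxi0 [S1 [S2 [S3 S4]]]]]]].
have dtn0 : dt != 0 by apply: lt0r_neq0.
pose P n := fun z => lam n z * gg' M (rho n z) + xi n.
pose A n := nrm2 beta (rho n) + dt ^+ 2 / 4 * nrm2 beta (P n).
pose B n := vnrm2 beta (grad (c n)).
pose Dc n := nrm2 beta (lap grad div (avg (ct n.+1) (c n))).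
pose Dr n := vnrm2 beta (grad (avg (rhot n.+1) (rho n))).
have Pnn : forall n, 0 <= nrm2 beta (P n) by move=> n; apply: nrm2_ge0.
have dt2 : 0 <= dt ^+ 2 / 4 by apply: mulr_ge0; [apply: sqr_ge0 | lra].
have A0 : forall n, 0 <= A n.
  move=> n; rewrite /A; have := nrm2_ge0 (rho n) Hb; have := ler_wpM2l dt2 (Pnn n); lra.
have B0 : forall n, 0 <= B n by move=> n; apply: vnrm2_ge0.
have rA : forall n, nrm2 beta (rho n) <= A n.
  move=> n; rewrite /A; have := ler_wpM2l dt2 (Pnn n); lra.
have gct : forall n, grad (ct n.+1) = grad (c n.+1).
  move=> n; have [th [hth _]] := S4 n.
  have -> : c n.+1 = fun z => 1 * ct n.+1 z + (dt * th) * @onef R S z.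
    apply: funext => z; have := hth z; move/(congr1 (fun t => t * dt)).
    rewrite divfK // /onef => e; lra.
  rewrite (grad_lin Hs) Hg; apply: funext => z; apply: funext => i; ring.
have Cn : forall n, B n.+1 - B n + dt * Dc n <= dt * (3 * A n + A n.-1).
  move=> n.
  have := @c_step R S d beta grad div dt (ct n.+1) (c n) (fun z => 3/2 * rho n z - 1/2 * rho n.-1 z) Hs dt0.
  rewrite gct => h; have := h (fun z => ltac:(rewrite S1; ring)) => {h} h.
  have hf : nrm2 beta (fun z => 3/2 * rho n z - 1/2 * rho n.-1 z)
            <= 3 * nrm2 beta (rho n) + nrm2 beta (rho n.-1).
    rewrite !nrm2_II; Icol; apply: I_le => // z.
    have := sqr_ge0 (rho n z + rho n.-1 z); lra.
  have := ler_wpM2l (ltW dt0) hf; have := rA n; have := rA n.-1.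
  have := ler_wpM2l (ltW dt0) (rA n); have := ler_wpM2l (ltW dt0) (rA n.-1).
  rewrite /B /Dc; lra.
have Rn : forall n, A n.+1 - A n + dt * Dr n <= dt * M ^+ 2 * (3 * B n + B n.-1).
  move=> n.
  have := @r_step R S d beta grad div M dt (rhot n.+1) (rho n) (rho n.-1) (rho n.+1)
     (P n) (P n.+1) (c n) (c n.-1) Hs M0 dt0 (Hsign n).1 (Hsign n.-1).1 (fun z => etrans (S2 n z) (esym (addrA _ _ _))).
  have h3 : forall z, (rho n.+1 z - rhot n.+1 z) / dt = (P n.+1 z - P n z) / 2.
    by move=> z; have [h _] := S3 n; rewrite h /P; congr (_ / 2); ring.
  move=> h; have := h h3 (Hsign n.+1).2 (Hsign n).2.
  rewrite /A /B /Dr; lra.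
have Hstep : forall n, (A n.+1 + B n.+1) - (A n + B n) + dt * (Dc n + Dr n)
                       <= dt * K2 * ((A n + B n) + (A n.-1 + B n.-1)).
  move=> n; have := Cn n; have := Rn n.
  have : 0 <= dt * (K2 * ((A n + B n) + (A n.-1 + B n.-1))
                    - (3 * A n + A n.-1) - M ^+ 2 * (3 * B n + B n.-1)).
    apply: mulr_ge0; first exact: ltW.
    have := A0 n; have := A0 n.-1; have := B0 n; have := B0 n.-1; have := sqr_ge0 M.
    rewrite /K2 => a1 a2 a3 a4 a5.
    have := mulr_ge0 a1 a5; have := mulr_ge0 a2 a5; have := mulr_ge0 a3 a5; have := mulr_ge0 a4 a5.
    nra.
  lra.
have G := @gronwall R (fun n => A n + B n) (fun n => Dc n + Dr n) dt K2 Tf dt0 K20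
  (fun n => addr_ge0 (A0 n) (B0 n))
  (fun n => addr_ge0 (nrm2_ge0 _ Hb) (vnrm2_ge0 _ Hb)) Hstep m mT.
have P00 : nrm2 beta (P 0%N) = 0.
  rewrite nrm2_II -(@II0 R S beta); apply: I_ext => z; rewrite /P Hlam0 Hxi0; ring.
move: G; rewrite big_split /= mulrDr /A /B P00 mulr0 addr0 /Dc /Dr.
rewrite -/(P m).
lra.
Qed.
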